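(* Let $h>0$, $n\in\mathbb{N}$, and let $\lambda:\mathbb{T}\to\mathbb{R}$ be an $n$-cycle with values $\lambda_0,\dots,\lambda_{n-1}\in\mathbb{R}\setminus\{\tfrac1h\}$, i.e. $\lambda(t)=\lambda_k$ whenever $t/h\equiv k \pmod n$. Assume $0<|e_{-\lambda}(nh)|\neq 1$. Let $f:\mathbb{T}\to\mathbb{R}$ be arbitrary. Then the equation $$\Delta_h y(t)+\lambda(t)y(t)=f(t),\qquad t\in\mathbb{T},$$ has Hyers–Ulam stability on $\mathbb{T}$ with Hyers–Ulam stability constant $$K_0(-\lambda)=\frac{h\,|e_{-\lambda}(nh)|}{\bigl|1-|e_{-\lambda}(nh)|\bigr|}\max\{S_0(-\lambda),\dots,S_{n-1}(-\lambda)\}.$$ Moreover, if $|e_{-\lambda}(nh)|>1$, then $K_0(-\lambda)$ is the minimum Hyers–Ulam stability constant for this equation.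
   Context: Fix $h>0$ and let $\mathbb{T}=\{0,h,2h,3h,\dots\}$. For $x:\mathbb{T}\to\mathbb{R}$, $\Delta_h x(t)=\frac{x(t+h)-x(t)}{h}$ and $\Delta_h^2x=\Delta_h(\Delta_h x)$, $\Delta_h^3x=\Delta_h(\Delta_h^2 x)$. An $n$-cycle is a function $\mu:\mathbb{T}\to\mathbb{R}$ with $\mu(t)=\mu_k$ whenever $t/h\equiv k\pmod n$, $k\in\{0,\dots,n-1\}$, which has period $n$ and no smaller period. For such $\mu$ define the discrete exponential $e_\mu(t)=\prod_{k=0}^{t/h-1}(1+h\mu(kh))$ (empty product $=1$), so $e_\mu(nh)=\prod_{k=0}^{n-1}(1+h\mu_k)$. For $k\in\{0,\dots,n-1\}$ define $$S_k(\mu)=\sum_{j=1}^{n}\prod_{i=0}^{j-1}\frac{1}{|1+h\mu_{(k+i)\bmod n}|},$$ (e.g. $S_0(\mu)=\frac{1}{|1+h\mu_0|}+\frac{1}{|1+h\mu_0||1+h\mu_1|}+\dots+\frac{1}{|1+h\mu_0|\cdots|1+h\mu_{n-1}|}$), and, when $0<|e_\mu(nh)|\neq1$, $$K_0(\mu)=\frac{h|e_\mu(nh)|}{\bigl|1-|e_\mu(nh)|\bigr|}\max\{S_0(\mu),\dots,S_{n-1}(\mu)\}.$$ Here $-\lambda$ denotes the $n$-cycle with values $-\lambda_0,\dots,-\lambda_{n-1}$. Hyers–Ulam stability: an equation $\mathcal{L}[y](t)=f(t)$, $t\in\mathbb{T}$ (with $\mathcal{L}$ a linear difference operator) has Hyers–Ulam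 stability on $\mathbb{T}$ with Hyers–Ulam stability constant $K>0$ if for every $\varepsilon>0$ and every $\xi:\mathbb{T}\to\mathbb{R}$ with $|\mathcal{L}[\xi](t)-f(t)|\le\varepsilon$ for all $t\in\mathbb{T}$, there is a solution $y:\mathbb{T}\to\mathbb{R}$ of the equation with $|\xi(t)-y(t)|\le K\varepsilon$ for all $t\in\mathbb{T}$. The minimum Hyers–Ulam stability constant is the smallest such $K$. *)

(* Defs.v *)
From Stdlib Require Import Reals Lra Lia List.
Open Scope R_scope.

(* A function x : T -> R on T = {0,h,2h,...} is represented by
   x : nat -> R with x k = x(kh). *)

Definition delta_h (h : R) (x : nat -> R) (k : nat) : R :=
  (x (S k) - x k) / h.

Definition is_ncycle (n : nat) (mu : nat -> R) : Prop :=
  (0 < n)%nat /\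
  (forall k, mu (k + n)%nat = mu k) /\
  (forall m, (0 < m < n)%nat -> ~ (forall k, mu (k + m)%nat = mu k)).

Fixpoint prodR (m : nat) (F : nat -> R) : R :=
  match m with
  | O => 1
  | S m' => prodR m' F * F m'
  end.

Fixpoint sumR (m : nat) (F : nat -> R) : R :=
  match m with
  | O => 0
  | S m' => sumR m' F + F m'
  end.

Definition e_disc (h : R) (mu : nat -> R) (m : nat) : R :=
  prodR m (fun k => 1 + h * mu k).

Definition S_k (h : R) (n : nat) (mu : nat -> R) (k : nat) : R :=
  sumR n (fun j' => prodR (S j')
            (fun i => / Rabs (1 + h * mu (Nat.modulo (k + i) n)))).

Definition maxR (n : nat) (F : nat -> R) : R :=
  match n with
  | O => 0
  | S n' => fold_right Rmax (F O) (map F (seq 1 n'))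
  end.

Definition K0 (h : R) (n : nat) (mu : nat -> R) : R :=
  h * Rabs (e_disc h mu n) / Rabs (1 - Rabs (e_disc h mu n))
  * maxR n (S_k h n mu).

Definition Lop (h : R) (lam : nat -> R) (y : nat -> R) (k : nat) : R :=
  delta_h h y k + lam k * y k.

Definition HUS (h : R) (lam f : nat -> R) (K : R) : Prop :=
  0 < K /\
  forall eps : R, 0 < eps ->
  forall xi : nat -> R,
    (forall k, Rabs (Lop h lam xi k - f k) <= eps) ->
    exists y : nat -> R,
      (forall k, Lop h lam y k = f k) /\
      (forall k, Rabs (xi k - y k) <= K * eps).

Definition min_HUS (h : R) (lam f : nat -> R) (K : R) : Prop :=
  HUS h lam f K /\ (forall K', HUS h lam f K' -> K <= K').

(* Main.v *)
Require Import Defs.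
From Stdlib Require Import Reals Lra Lia List.
Open Scope R_scope.

Lemma prodR_ext m F G : (forall i, (i < m)%nat -> F i = G i) -> prodR m F = prodR m G.
Proof. induction m; intros H; simpl; auto. rewrite IHm by (intros; apply H; lia). rewrite H by lia; auto. Qed.

Lemma sumR_ext m F G : (forall i, (i < m)%nat -> F i = G i) -> sumR m F = sumR m G.
Proof. induction m; intros H; simpl; auto. rewrite IHm by (intros; apply H; lia). rewrite H by lia; auto. Qed.

Lemma prodR_shift m F : prodR (S m) F = F 0%nat * prodR m (fun i => F (S i)).
Proof. induction m; simpl in *. ring. rewrite IHm. ring. Qed.

Lemma sumR_shift m F : sumR (S m) F = F 0%nat + sumR m (fun i => F (S i)).
Proof. induction m; simpl in *. ring. rewrite IHm. ring. Qed.

Lemma prodR_add a b F : prodR (a + b) F = prodR a F * prodR b (fun i => F (a + i)%nat).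
Proof. induction b; simpl. rewrite Nat.add_0_r; ring. rewrite Nat.add_succ_r; simpl. rewrite IHb. ring. Qed.

Lemma sumR_add a b F : sumR (a + b) F = sumR a F + sumR b (fun i => F (a + i)%nat).
Proof. induction b; simpl. rewrite Nat.add_0_r; ring. rewrite Nat.add_succ_r; simpl. rewrite IHb. ring. Qed.

Lemma prodR_abs m F : Rabs (prodR m F) = prodR m (fun i => Rabs (F i)).
Proof. induction m; simpl. apply Rabs_R1. rewrite Rabs_mult, IHm; auto. Qed.

Lemma prodR_inv m F : prodR m (fun i => / F i) = / prodR m F.
Proof. induction m; simpl. now rewrite Rinv_1. rewrite IHm, Rinv_mult; auto. Qed.

Lemma prodR_pos m F : (forall i, 0 < F i) -> 0 < prodR m F.
Proof. induction m; simpl; intros; [lra|]. apply Rmult_lt_0_compat; auto. Qed.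

Lemma sumR_pos m F : (0 < m)%nat -> (forall i, 0 < F i) -> 0 < sumR m F.
Proof. induction m; simpl; intros; [lia|]. destruct m. simpl. specialize (H0 0%nat); lra.
 assert (0 < sumR (S m) F) by (apply IHm; auto; lia). specialize (H0 (S m)); lra. Qed.

Lemma sumR_nonneg m F : (forall i, 0 <= F i) -> 0 <= sumR m F.
Proof. induction m; simpl; intros; [lra|]. specialize (IHm H); specialize (H m); lra. Qed.

Lemma sumR_le m F G : (forall i, F i <= G i) -> sumR m F <= sumR m G.
Proof. induction m; simpl; intros; [lra|]. specialize (IHm H); specialize (H m); lra. Qed.

Lemma sumR_abs m F : Rabs (sumR m F) <= sumR m (fun i => Rabs (F i)).
Proof. induction m; simpl. rewrite Rabs_R0; lra. eapply Rle_trans. apply Rabs_triang. lra. Qed.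

Lemma sumR_scal c m F : sumR m (fun i => c * F i) = c * sumR m F.
Proof. induction m; simpl. ring. rewrite IHm; ring. Qed.

Lemma sumR_mono m k F : (forall i, 0 <= F i) -> sumR m F <= sumR (m + k) F.
Proof. intros. rewrite sumR_add. assert (0 <= sumR k (fun i => F (m+i)%nat)) by (apply sumR_nonneg; auto). lra. Qed.

Lemma fold_max_ge x l : x <= fold_right Rmax x l /\ forall y, In y l -> y <= fold_right Rmax x l.
Proof. induction l; simpl. split; [lra| tauto]. destruct IHl as [H1 H2]. split.
 eapply Rle_trans; [apply H1| apply Rmax_r].
 intros y [<-|Hy]. apply Rmax_l. eapply Rle_trans; [apply H2; auto| apply Rmax_r]. Qed.

Lemma fold_max_att x l : fold_right Rmax x l = x \/ In (fold_right Rmax x l) l.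
Proof. induction l; simpl. auto. set (m := fold_right Rmax x l) in *. unfold Rmax. destruct (Rle_dec a m).
 destruct IHl as [H|H]; [left; exact H| right; right; exact H]. right; left; reflexivity. Qed.

Lemma maxR_ge n F i : (i < n)%nat -> F i <= maxR n F.
Proof. destruct n; [lia|]. intros Hi; simpl. destruct (fold_max_ge (F 0%nat) (map F (seq 1 n))) as [H1 H2].
 destruct i; auto. apply H2. apply in_map. apply in_seq. lia. Qed.

Lemma maxR_att n F : (0 < n)%nat -> exists i, (i < n)%nat /\ maxR n F = F i.
Proof. destruct n; [lia|]. intros _; simpl. destruct (fold_max_att (F 0%nat) (map F (seq 1 n))) as [H|H].
 exists 0%nat; split; auto; lia. apply in_map_iff in H. destruct H as [x [Hx Hin]]. apply in_seq in Hin.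
 exists x; split; auto; lia. Qed.

Definition Af h (lam : nat -> R) k := 1 + h * - lam k.
Definition pp h lam k N := prodR N (fun i => / Rabs (Af h lam (k+i))).
Definition ss h lam k N := sumR N (fun m => pp h lam k (S m)).

Lemma lam_per_mul n (lam : nat -> R) : (forall k, lam (k+n)%nat = lam k) ->
  forall m j, lam (j + m*n)%nat = lam j.
Proof. intros H; induction m; intros j. now rewrite Nat.add_0_r.
 replace (j + S m * n)%nat with ((j + m*n) + n)%nat by lia. rewrite H; auto. Qed.

Lemma lam_mod n (lam : nat -> R) : (0 < n)%nat -> (forall k, lam (k+n)%nat = lam k) ->
  forall x, lam (x mod n) = lam x.
Proof. intros Hn H x. rewrite (Nat.div_mod_eq x n) at 2.
 replace (n * (x / n) + x mod n)%nat with (x mod n + (x/n)*n)%nat by lia.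
 now rewrite lam_per_mul. Qed.

Lemma Sk_eq h n lam k : (0 < n)%nat -> (forall k, lam (k+n)%nat = lam k) ->
  S_k h n (fun t => - lam t) k = ss h lam k n.
Proof. intros Hn H. unfold S_k, ss, pp. apply sumR_ext; intros j _. apply prodR_ext; intros i _.
 unfold Af. now rewrite lam_mod. Qed.

Lemma Sk_mod h n lam k : (0 < n)%nat ->
  S_k h n (fun t => - lam t) k = S_k h n (fun t => - lam t) (k mod n).
Proof. intros Hn. unfold S_k. apply sumR_ext; intros j _. apply prodR_ext; intros i _.
 rewrite Nat.add_mod_idemp_l; auto; lia. Qed.

Lemma ss_le_max h n lam k : (0 < n)%nat -> (forall k, lam (k+n)%nat = lam k) ->
  ss h lam k n <= maxR n (S_k h n (fun t => - lam t)).
Proof. intros Hn H. rewrite <- Sk_eq by auto. rewrite Sk_mod by auto. apply maxR_ge.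
 apply Nat.mod_upper_bound; lia. Qed.

Lemma prod_cyc h n lam k : (forall k, lam (k+n)%nat = lam k) -> (forall k, Af h lam k <> 0) ->
  prodR n (fun i => Af h lam (k+i)%nat) = prodR n (Af h lam).
Proof. intros H HA. induction k. apply prodR_ext; auto.
 apply (Rmult_eq_reg_l (Af h lam k)); auto.
 rewrite <- IHk.
 transitivity (prodR (S n) (fun i => Af h lam (k+i)%nat)).
 { rewrite prodR_shift. rewrite Nat.add_0_r. f_equal. apply prodR_ext; intros; f_equal; lia. }
 replace (S n) with (n + 1)%nat by lia.
 rewrite prodR_add. simpl. repeat rewrite Nat.add_0_r.
 replace (Af h lam (k + n)%nat) with (Af h lam k) by (unfold Af; rewrite H; auto).
 rewrite Rmult_1_l, Rmult_comm. f_equal. Qed.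

Lemma pp_n h n lam k : (forall k, lam (k+n)%nat = lam k) -> (forall k, Af h lam k <> 0) ->
  pp h lam k n = / Rabs (prodR n (Af h lam)).
Proof. intros H HA. unfold pp. rewrite prodR_inv, <- prodR_abs, prod_cyc; auto. Qed.

Lemma pp_add h lam k a b : pp h lam k (a+b) = pp h lam k a * pp h lam (k+a) b.
Proof. unfold pp. rewrite prodR_add. f_equal. apply prodR_ext; intros; rewrite Nat.add_assoc; reflexivity. Qed.

Lemma pp_per h n lam k N : (forall k, lam (k+n)%nat = lam k) -> pp h lam (k+n) N = pp h lam k N.
Proof. intros H. unfold pp. apply prodR_ext; intros. unfold Af.
 replace (k + n + i)%nat with ((k+i)+n)%nat by lia. rewrite H; auto. Qed.

Lemma pp_pos h lam k N : (forall k, Af h lam k <> 0) -> 0 < pp h lam k N.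
Proof. intros HA. apply prodR_pos; intros. apply Rinv_0_lt_compat, Rabs_pos_lt; auto. Qed.

Lemma key h n lam k : (forall k, lam (k+n)%nat = lam k) -> (forall k, Af h lam k <> 0) ->
  Rabs (Af h lam k) * ss h lam k n = 1 - / Rabs (prodR n (Af h lam)) + ss h lam (S k) n.
Proof. intros H HA.
 assert (E1 : ss h lam k (n+1) = ss h lam k n + pp h lam k (S n)).
 { unfold ss. rewrite sumR_add. simpl. rewrite Nat.add_0_r. ring. }
 assert (E2 : ss h lam k (1+n) = ss h lam k 1 + pp h lam k 1 * ss h lam (S k) n).
 { unfold ss. rewrite sumR_add. f_equal. rewrite <- sumR_scal. apply sumR_ext; intros.
   replace (S (1 + i)) with (1 + S i)%nat by lia. rewrite pp_add. replace (k+1)%nat with (S k) by lia; reflexivity. }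
 replace (S n) with (1 + n)%nat in E1 by lia. rewrite pp_add in E1. rewrite (pp_n h n lam) in E1 by auto.
 replace (1+n)%nat with (n+1)%nat in E2 by lia. rewrite E1 in E2.
 assert (P1 : pp h lam k 1 = / Rabs (Af h lam k)) by (unfold pp; simpl; rewrite Nat.add_0_r; ring).
 assert (S1 : ss h lam k 1 = pp h lam k 1) by (unfold ss; simpl; ring).
 rewrite S1, P1 in E2. replace (k+1)%nat with (S k) in E2 by lia.
 assert (Ha : 0 < Rabs (Af h lam k)) by (apply Rabs_pos_lt; auto).
 apply (Rmult_eq_compat_l (Rabs (Af h lam k))) in E2. rewrite !Rmult_plus_distr_l in E2.
 rewrite <- !Rmult_assoc in E2. rewrite Rinv_r in E2 by lra. lra. Qed.

Lemma ss_rec h n lam k N : (forall k, lam (k+n)%nat = lam k) -> (forall k, Af h lam k <> 0) ->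
  ss h lam k (n + N) = ss h lam k n + / Rabs (prodR n (Af h lam)) * ss h lam k N.
Proof. intros H HA. unfold ss at 1. rewrite sumR_add. f_equal. unfold ss. rewrite <- sumR_scal.
 apply sumR_ext; intros. rewrite <- Nat.add_succ_r, pp_add, (pp_n h n lam), (pp_per h n lam); auto. Qed.

Lemma ss_nonneg h lam k N : (forall k, Af h lam k <> 0) -> 0 <= ss h lam k N.
Proof. intros HA; apply sumR_nonneg; intros; left; apply pp_pos; auto. Qed.

Lemma ss_bound h n lam k N : (0 < n)%nat -> (forall k, lam (k+n)%nat = lam k) -> (forall k, Af h lam k <> 0) ->
  / Rabs (prodR n (Af h lam)) < 1 ->
  ss h lam k N * (1 - / Rabs (prodR n (Af h lam))) <= ss h lam k n.
Proof. intros Hn H HA Hq. set (q := / Rabs (prodR n (Af h lam))) in *.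
 assert (q0 : 0 < q). { unfold q. rewrite <- (pp_n h n lam 0) by auto. apply pp_pos; auto. }
 induction N as [N IH] using (well_founded_induction Wf_nat.lt_wf).
 destruct (Compare_dec.le_lt_dec N n).
 - assert (ss h lam k N <= ss h lam k n).
   { replace n with (N + (n - N))%nat by lia. unfold ss; apply sumR_mono. intros; left; apply pp_pos; auto. }
   assert (0 <= ss h lam k N) by (apply ss_nonneg; auto). nra.
 - replace N with (n + (N - n))%nat by lia. rewrite ss_rec by auto. fold q.
   assert (IH' := IH (N - n)%nat ltac:(lia)).
   assert (0 <= ss h lam k n) by (apply ss_nonneg; auto). nra. Qed.

Lemma ss_mn h n lam k m : (forall k, lam (k+n)%nat = lam k) -> (forall k, Af h lam k <> 0) ->
  (1 - / Rabs (prodR n (Af h lam))) * ss h lam k (m*n) = ss h lam k n * (1 - (/ Rabs (prodR n (Af h lam)))^m)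
  /\ pp h lam k (m*n) = (/ Rabs (prodR n (Af h lam)))^m.
Proof. intros H HA. set (q := / Rabs (prodR n (Af h lam))). induction m; simpl.
 - unfold ss, pp; simpl. split; ring.
 - destruct IHm as [I1 I2]. rewrite ss_rec, pp_add, (pp_n h n lam) by auto. fold q.
   replace (pp h lam (k+n) (m*n)) with (pp h lam k (m*n)) by (symmetry; apply pp_per; auto).
   rewrite I2. split; [|ring]. rewrite Rmult_plus_distr_l.
   replace ((1 - q) * (q * ss h lam k (m * n))) with (q * ((1 - q) * ss h lam k (m * n))) by ring.
   rewrite I1. ring. Qed.
From Coquelicot Require Import Coquelicot.
Open Scope R_scope.

Lemma sum_n_sumR (a : nat -> R) N : sum_n a N = sumR (S N) a.
Proof. induction N. rewrite sum_O. simpl. ring. rewrite sum_Sn, IHN. simpl. unfold plus; simpl. ring. Qed.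

Fixpoint fwd (a g : nat -> R) (h x0 : R) (k : nat) : R :=
  match k with O => x0 | S k' => a k' * fwd a g h x0 k' + h * g k' end.

Lemma Lop_sol h lam xi f u : h <> 0 ->
  (forall k, u (S k) = Af h lam k * u k + h * (Lop h lam xi k - f k)) ->
  forall k, Lop h lam (fun j => xi j - u j) k = f k.
Proof. intros Hh Hu k. unfold Lop, delta_h in *. rewrite Hu. unfold Af. field. auto. Qed.

Lemma small_case h n lam g eps : 0 < h -> (0 < n)%nat -> (forall k, lam (k+n)%nat = lam k) ->
  (forall k, Af h lam k <> 0) -> Rabs (prodR n (Af h lam)) < 1 -> 0 < Rabs (prodR n (Af h lam)) ->
  (forall k, Rabs (g k) <= eps) ->
  forall k, Rabs (fwd (Af h lam) g h 0 k) <=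
     h * eps * (Rabs (prodR n (Af h lam)) * ss h lam k n / (1 - Rabs (prodR n (Af h lam)))).
Proof. intros Hh Hn H HA HP HP0 Hg. set (P := Rabs (prodR n (Af h lam))) in *.
 assert (eps0 : 0 <= eps) by (eapply Rle_trans; [apply Rabs_pos| apply (Hg 0%nat)]).
 induction k; simpl.
 - rewrite Rabs_R0. assert (0 <= ss h lam 0 n) by (apply ss_nonneg; auto).
   apply Rmult_le_pos. apply Rmult_le_pos; lra. unfold Rdiv. apply Rmult_le_pos.
   apply Rmult_le_pos; lra. left; apply Rinv_0_lt_compat; lra.
 - assert (K := key h n lam k H HA). fold P in K.
   eapply Rle_trans. apply Rabs_triang. rewrite !Rabs_mult.
   rewrite (Rabs_right h) by lra.
   assert (Ha : 0 <= Rabs (Af h lam k)) by apply Rabs_pos.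
   assert (Hgk := Hg k).
   apply Rle_trans with (Rabs (Af h lam k) * (h * eps * (P * ss h lam k n / (1 - P))) + h * eps).
   { apply Rplus_le_compat. apply Rmult_le_compat_l; auto. apply Rmult_le_compat_l; lra. }
   replace (Rabs (Af h lam k) * (h * eps * (P * ss h lam k n / (1 - P))))
     with (h * eps * (P * (Rabs (Af h lam k) * ss h lam k n) / (1 - P))) by (field; lra).
   rewrite K. right. field_simplify; [|lra|lra]. unfold Rdiv. apply Rmult_eq_compat_r.
   replace (P * / P) with 1 by (field; lra). ring. Qed.

Definition Qf h lam k N := prodR N (fun i => / Af h lam (k+i)).

Lemma Qf_abs h lam k N : Rabs (Qf h lam k N) = pp h lam k N.
Proof. unfold Qf, pp. rewrite prodR_abs. apply prodR_ext; intros; apply Rabs_inv. Qed.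

Lemma Qf_shift h lam k m : Qf h lam k (S (S m)) = / Af h lam k * Qf h lam (S k) (S m).
Proof. unfold Qf. rewrite (prodR_shift (S m)). rewrite Nat.add_0_r. f_equal.
 apply prodR_ext; intros. rewrite Nat.add_succ_r. reflexivity. Qed.

Definition Tt h lam (g : nat -> R) k := fun m => g (k+m)%nat * Qf h lam k (S m).

Lemma big_case h n lam g eps k : 0 < h -> (0 < n)%nat -> (forall k, lam (k+n)%nat = lam k) ->
  (forall k, Af h lam k <> 0) -> / Rabs (prodR n (Af h lam)) < 1 ->
  (forall k, Rabs (g k) <= eps) ->
  ex_series (Tt h lam g k) /\
  Rabs (Series (Tt h lam g k)) * (1 - / Rabs (prodR n (Af h lam))) <= eps * ss h lam k n.
Proof. intros Hh Hn H HA Hq Hg. set (q := / Rabs (prodR n (Af h lam))) in *.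
 assert (eps0 : 0 <= eps) by (eapply Rle_trans; [apply Rabs_pos| apply (Hg 0%nat)]).
 assert (q0 : 0 < q). { unfold q. rewrite <- (pp_n h n lam 0) by auto. apply pp_pos; auto. }
 set (b := fun m => eps * pp h lam k (S m)).
 assert (Sb : forall N, sum_n b N = eps * ss h lam k (S N)).
 { intros N. rewrite sum_n_sumR. unfold ss, b. apply sumR_scal. }
 assert (Bd : forall N, sum_n b N <= eps * ss h lam k n / (1 - q)).
 { intros N. rewrite Sb. assert (X := ss_bound h n lam k (S N) Hn H HA Hq). fold q in X.
   unfold Rdiv. rewrite Rmult_assoc. apply Rmult_le_compat_l; auto.
   apply (Rmult_le_reg_r (1 - q)). lra. rewrite Rmult_assoc, Rinv_l by lra. lra. }
 assert (Tb : forall m, Rabs (Tt h lam g k m) <= b m).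
 { intros m. unfold Tt, b. rewrite Rabs_mult, Qf_abs. apply Rmult_le_compat_r.
   left; apply pp_pos; auto. auto. }
 assert (Eb : ex_series b).
 { assert (F : ex_finite_lim_seq (sum_n b)).
   { apply (ex_finite_lim_seq_incr _ (eps * ss h lam k n / (1 - q))); auto.
     intros N. rewrite sum_Sn. unfold plus; simpl. unfold b.
     assert (0 < pp h lam k (S (S N))) by (apply pp_pos; auto). nra. }
   destruct F as [l Hl]. exists l. exact Hl. }
 assert (ET : ex_series (Tt h lam g k)) by (apply (@ex_series_le R_AbsRing R_CompleteNormedModule _ b); auto).
 split; auto.
 assert (L : is_lim_seq (sum_n (Tt h lam g k)) (Series (Tt h lam g k))).
 { apply Series_correct in ET. exact ET. }
 apply is_lim_seq_abs in L.
 assert (PB : forall N, Rabs (sum_n (Tt h lam g k) N) <= eps * ss h lam k n / (1 - q)).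
 { intros N. eapply Rle_trans; [|apply (Bd N)]. rewrite !sum_n_sumR.
   eapply Rle_trans. apply sumR_abs. apply sumR_le. auto. }
 assert (LE := is_lim_seq_le _ _ _ _ PB L (is_lim_seq_const (eps * ss h lam k n / (1 - q)))).
 simpl in LE. apply (Rmult_le_compat_r (1 - q)) in LE; [|lra].
 unfold Rdiv in LE. rewrite Rmult_assoc, Rinv_l in LE by lra. lra. Qed.

Lemma Series_rec h lam g k : Af h lam k <> 0 -> ex_series (Tt h lam g k) ->
  Series (Tt h lam g k) = / Af h lam k * (g k + Series (Tt h lam g (S k))).
Proof. intros HA E. rewrite Series_incr_1 by auto.
 rewrite (Series_ext _ (fun m => / Af h lam k * Tt h lam g (S k) m)).
 2:{ intros m. unfold Tt. rewrite Qf_shift. rewrite Nat.add_succ_r. simpl. ring. }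
 rewrite Series_scal_l. unfold Tt, Qf. simpl. rewrite !Nat.add_0_r. ring. Qed.


Lemma minimal h n lam f K' k0 : 0 < h -> (0 < n)%nat -> (forall k, lam (k+n)%nat = lam k) ->
  (forall k, Af h lam k <> 0) -> 1 < Rabs (prodR n (Af h lam)) -> HUS h lam f K' ->
  h * ss h lam k0 n <= (1 - / Rabs (prodR n (Af h lam))) * K'.
Proof. intros Hh Hn H HA HP [K'pos HK].
 set (q := / Rabs (prodR n (Af h lam))).
 assert (q0 : 0 < q). { unfold q. rewrite <- (pp_n h n lam 0) by auto. apply pp_pos; auto. }
 assert (q1 : q < 1). { unfold q. rewrite <- Rinv_1. apply Rinv_lt_contravar; lra. }
 set (g := fun j => if Nat.ltb j k0 then 0 else if Rle_dec 0 (Qf h lam k0 (S (j - k0))) then -1 else 1).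
 set (xi := fwd (Af h lam) (fun j => f j + g j) h 0).
 assert (Lxi : forall j, Rabs (Lop h lam xi j - f j) <= 1).
 { intros j. replace (Lop h lam xi j - f j) with (g j).
   2:{ unfold Lop, delta_h, xi. simpl. unfold Af. field. lra. }
   unfold g. destruct (Nat.ltb j k0). rewrite Rabs_R0; lra.
   destruct (Rle_dec _ _); unfold Rabs; destruct Rcase_abs; lra. }
 destruct (HK 1 Rlt_0_1 xi Lxi) as [y [Hy Hb]].
 set (u := fun j => xi j - y j).
 assert (Hu : forall j, u (S j) = Af h lam j * u j + h * g j).
 { intros j. assert (E : y (S j) - y j = h * (f j - lam j * y j)).
   { rewrite <- (Hy j). unfold Lop, delta_h. field. lra. }
   unfold u, xi. simpl. fold xi. unfold Af in *. nra. }
 assert (gQ : forall m, g (k0 + m)%nat * Qf h lam k0 (S m) = - pp h lam k0 (S m)).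
 { intros m. rewrite <- Qf_abs. unfold g.
   replace (Nat.ltb (k0 + m) k0) with false by (symmetry; apply Nat.ltb_ge; lia).
   replace (k0 + m - k0)%nat with m by lia.
   destruct (Rle_dec _ _). rewrite Rabs_right by lra. ring. rewrite Rabs_left by lra. ring. }
 assert (rel : forall m, u (k0+m)%nat * Qf h lam k0 m = u k0 - h * ss h lam k0 m).
 { induction m. unfold Qf, ss; simpl. rewrite Nat.add_0_r. ring.
   rewrite Nat.add_succ_r, Hu.
   assert (QS : Qf h lam k0 (S m) = Qf h lam k0 m * / Af h lam (k0 + m)%nat) by reflexivity.
   assert (SS : ss h lam k0 (S m) = ss h lam k0 m + pp h lam k0 (S m)) by reflexivity.
   assert (G := gQ m). rewrite QS in G. rewrite SS, QS.
   match goal with |- (?A * ?U + h * ?Gm) * (?Q * ?I) = _ =>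
     replace ((A * U + h * Gm) * (Q * I)) with (U * Q + h * (Gm * (Q * I))) by (field; auto) end.
   rewrite G, IHm. ring. }
 assert (ineq : forall m, h * ss h lam k0 m <= K' + K' * pp h lam k0 m).
 { intros m. assert (R := rel m).
   assert (B1 := Hb k0). assert (B2 := Hb (k0+m)%nat). fold (u k0) in B1. fold (u (k0+m)%nat) in B2.
   rewrite Rmult_1_r in B1, B2.
   assert (B3 : Rabs (u (k0+m)%nat * Qf h lam k0 m) <= K' * pp h lam k0 m).
   { rewrite Rabs_mult, Qf_abs. apply Rmult_le_compat_r. left; apply pp_pos; auto. auto. }
   assert (X1 := Rle_abs (u k0)). assert (X2 := Rle_abs (- (u (k0 + m)%nat * Qf h lam k0 m))).
   rewrite Rabs_Ropp in X2. lra. }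
 set (S0 := ss h lam k0 n).
 assert (mn : forall M, h * S0 * (1 - q^M) <= (1 - q) * K' * (1 + q^M)).
 { intros M. destruct (ss_mn h n lam k0 M H HA) as [E1 E2]. fold q in E1, E2. fold S0 in E1.
   assert (I := ineq (M*n)%nat). rewrite E2 in I.
   replace (h * S0 * (1 - q^M)) with (h * ((1-q) * ss h lam k0 (M*n))) by (rewrite E1; ring).
   apply Rmult_le_compat_l with (r := 1 - q) in I; [|lra]. lra. }
 destruct (Rle_dec (h * S0) ((1-q)*K')) as [ok|bad]; auto. exfalso.
 assert (d0 : 0 < h * S0 - (1-q)*K') by lra.
 assert (c0 : 0 < h * S0 + (1-q)*K') by nra.
 destruct (pow_lt_1_zero q ltac:(rewrite Rabs_right; lra) ((h * S0 - (1-q)*K') / (h * S0 + (1-q)*K'))) as [N HN].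
 { apply Rdiv_lt_0_compat; auto. }
 specialize (HN N (le_n N)). rewrite Rabs_right in HN by (left; apply pow_lt; lra).
 apply (Rmult_lt_compat_r (h * S0 + (1-q)*K')) in HN; auto.
 unfold Rdiv in HN. rewrite Rmult_assoc, Rinv_l in HN by lra.
 specialize (mn N). nra. Qed.

Theorem theorem2p5 (h : R) (n : nat) (lam f : nat -> R) :
  0 < h ->
  is_ncycle n lam ->
  (forall k, lam k <> 1 / h) ->
  0 < Rabs (e_disc h (fun t => - lam t) n) ->
  Rabs (e_disc h (fun t => - lam t) n) <> 1 ->
  HUS h lam f (K0 h n (fun t => - lam t)) /\
  (Rabs (e_disc h (fun t => - lam t) n) > 1 ->
   min_HUS h lam f (K0 h n (fun t => - lam t))).
Proof.
 intros Hh [Hn [H _]] Hl HP0 HP1.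
 assert (HA : forall k, Af h lam k <> 0).
 { intros k E. apply (Hl k). unfold Af in E. assert (X : h * lam k = 1) by lra.
   replace (lam k) with (h * lam k / h) by (field; lra). rewrite X. reflexivity. }
 unfold K0, e_disc in *.
 change (prodR n (fun k => 1 + h * - lam k)) with (prodR n (Af h lam)) in *.
 set (Mx := maxR n (S_k h n (fun t => - lam t))) in *.
 set (P := Rabs (prodR n (Af h lam))) in *.
 assert (Mpos : 0 < Mx).
 { eapply Rlt_le_trans; [| apply (ss_le_max h n lam 0%nat); auto].
   apply sumR_pos; auto. intros; apply pp_pos; auto. }
 assert (MX : forall k, ss h lam k n <= Mx) by (intros; apply ss_le_max; auto).
 assert (HUS0 : HUS h lam f (h * P / Rabs (1 - P) * Mx)).
 { split.
   { apply Rmult_lt_0_compat; auto. apply Rdiv_lt_0_compat. nra. apply Rabs_pos_lt. lra. }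
   intros eps Heps xi Hxi. set (g := fun k => Lop h lam xi k - f k).
   destruct (Rlt_or_le P 1) as [Ps|Pb].
   - exists (fun j => xi j - fwd (Af h lam) g h 0 j). split.
     + apply Lop_sol. intro; lra. intros k. reflexivity.
     + intros k. replace (xi k - (xi k - fwd (Af h lam) g h 0 k)) with (fwd (Af h lam) g h 0 k) by ring.
       eapply Rle_trans. apply (small_case h n lam g eps); auto.
       fold P. rewrite (Rabs_right (1 - P)) by lra.
       assert (Mk := MX k). unfold Rdiv.
       assert (0 < / (1 - P)) by (apply Rinv_0_lt_compat; lra).
       assert (0 < h * eps * P * / (1-P)).
       { repeat apply Rmult_lt_0_compat; lra. }
       nra.
   - assert (Pb' : 1 < P) by lra.
     assert (q1 : / P < 1). { rewrite <- Rinv_1. apply Rinv_lt_contravar; lra. }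
     assert (BC := fun k => big_case h n lam g eps k Hh Hn H HA q1 Hxi).
     exists (fun j => xi j - (- h * Series (Tt h lam g j))). split.
     + apply Lop_sol. intro; lra. intros k. destruct (BC k) as [E _].
       cbv beta. rewrite (Series_rec h lam g k (HA k) E). unfold g. field. auto.
     + intros k. replace (xi k - (xi k - - h * Series (Tt h lam g k))) with (- h * Series (Tt h lam g k)) by ring.
       destruct (BC k) as [_ B]. rewrite Rabs_mult, Rabs_Ropp, (Rabs_right h) by lra.
       rewrite (Rabs_left1 (1 - P)) by lra.
       assert (Mk := MX k).
       replace (h * P / - (1 - P) * Mx * eps) with (h * (eps * Mx) / (1 - / P)) by (field; lra).
       apply (Rmult_le_reg_r (1 - / P)). lra. unfold Rdiv. rewrite (Rmult_assoc (h * _)), Rinv_l by lra.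
       rewrite Rmult_1_r, Rmult_assoc. apply Rmult_le_compat_l. lra. fold P in B.
       assert (eps * ss h lam k n <= eps * Mx) by (apply Rmult_le_compat_l; lra). lra. }
 split; auto. intros HPg. split; auto. intros K' HK'.
 destruct (maxR_att n (S_k h n (fun t => - lam t)) Hn) as [k0 [_ Hk0]]. fold Mx in Hk0.
 rewrite Sk_eq in Hk0 by auto.
 assert (Mi := minimal h n lam f K' k0 Hh Hn H HA HPg HK'). fold P in Mi.
 rewrite Hk0. rewrite Rabs_left1 by lra.
 replace (h * P / - (1 - P) * ss h lam k0 n) with (h * ss h lam k0 n / (1 - / P)) by (field; lra).
 apply (Rmult_le_reg_r (1 - / P)).
 { assert (/ P < 1) by (rewrite <- Rinv_1; apply Rinv_lt_contravar; lra). lra. }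
 unfold Rdiv. rewrite Rmult_assoc, Rinv_l. lra.
 assert (/ P < 1) by (rewrite <- Rinv_1; apply Rinv_lt_contravar; lra). lra.
Qed.
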